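(* Let $n\ge 1$, $\mathcal{I}=\{1,\dots,n\}$, $S>0$, and $C_i>0$, $D_i>0$ for $i\in\mathcal{I}$. Put $D=\sum_{i\in\mathcal{I}}D_i$, $\tilde D_i=\min\{C_i,D_i\}$, $\tilde\beta_i=\tilde D_i/D_i$. For $\theta\ge 0$ consider the linear program $P(\theta)$: $$\max\ \sum_{i\in\mathcal{I}}\big[\beta_i-\theta(\beta-\beta_i)\big]$$ over $(\beta_1,\dots,\beta_n,\beta)\in\mathbb{R}^{n+1}$ subject to $\sum_{i\in\mathcal{I}}\beta_iD_i\le S$; $0\le\beta_i\le\tilde\beta_i$ and $\beta_i\le\beta$ for all $i$; $0\le \beta\le 1$. Let $\beta^{EQ}=\max\{b\ge 0:\ (b,\dots,b,b)\text{ is feasible for }P(\theta)\}=\max\{b\ge0: b\le\tilde\beta_i\ \forall i,\ bD\le S,\ b\le 1\}$ (the perfectly equitable fill-rate), and assume the problem is non-utopian, i.e. $\beta^{EQ}D<S$. Let $m^U=|\{i\in\mathcal{I}:\beta^{EQ}<\tilde\beta_i\}|$ be the number of unbinding variables of the equitable solution, and set $$\theta^U=\frac{m^U}{n-m^U}.$$ Then $\theta^U$ is the tightest upper bound of $\theta$ in the following sense: (a) for every $\theta\ge\theta^U$, the solution $\beta_1=\dots=\beta_n=\beta=\beta^{EQ}$ is optimal for $P(\theta)$; (b) for every $\theta$ with $0\le\theta<\theta^U$, there exists a feasible solution $(\beta_1,\dots,\beta_n,\beta)$ of $P(\theta)$ with $n\beta^{EQ}<\sum_{i\in\mathcal{I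}}\beta_i-\theta\sum_{i\in\mathcal{I}}(\beta-\beta_i)$.
   Context: This models a food-bank allocating supply $S$ (pounds of food) among $n$ agencies; agency $i$ has capacity $C_i$ and demand $D_i$, $\beta_i$ is its fill-rate (allocation divided by demand), $\beta$ is (an upper bound on) the maximum fill-rate, and $\theta\ge0$ is a penalty on deviations from the maximum fill-rate. $\tilde D_i$ is the effective demand and $\tilde\beta_i$ the maximum possible fill-rate of agency $i$. A variable $\beta_i$ is called binding if $\beta_i=\tilde\beta_i$. The objective value of the equal-fill-rate solution at level $\beta^{EQ}$ is $n\beta^{EQ}$. *)

(* Defs.v *)
From HB Require Import structures.
From mathcomp Require Import all_boot all_order all_algebra.
Set Implicit Arguments. Unset Strict Implicit. Unset Printing Implicit Defensive.
Import Order.TTheory GRing.Theory Num.Theory.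
Local Open Scope ring_scope.

Section FoodBank.
Variables (R : realFieldType) (n : nat).
Implicit Types (S theta B : R).

Definition eff_demand C D (i : 'I_n) : R := Num.min (C i) (D i).

Definition max_fill C D (i : 'I_n) : R := eff_demand C D i / D i.

Definition lp_feasible S C D b B : Prop :=
  \sum_(i < n) b i * D i <= S /\
  (forall i, 0 <= b i /\ b i <= max_fill C D i) /\
  (forall i, b i <= B) /\
  0 <= B /\ B <= 1.

Definition lp_objective theta b B : R :=
  \sum_(i < n) (b i - theta * (B - b i)).

Definition lp_optimal S C D theta b B : Prop :=
  lp_feasible S C D b B /\
  forall b' B', lp_feasible S C D b' B' ->
    lp_objective theta b' B' <= lp_objective theta b B.

Definition is_betaEQ S C D b0 : Prop :=
  0 <= b0 /\ lp_feasible S C D (fun _ => b0) b0 /\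
  forall b1, 0 <= b1 -> lp_feasible S C D (fun _ => b1) b1 -> b1 <= b0.

Definition mU C D b0 : nat := #|[set i : 'I_n | b0 < max_fill C D i]|.

Definition thetaU C D b0 : R :=
  (mU C D b0)%:R / (n - mU C D b0)%:R.

End FoodBank.

(* Main.v *)
Require Import Defs.
From HB Require Import structures.
From mathcomp Require Import all_boot all_order all_algebra.
From mathcomp Require Import ring lra zify.
Import Order.TTheory GRing.Theory Num.Theory.
Local Open Scope ring_scope.

Lemma argmin_ex (R : realFieldType) (I : finType) (P : {pred I}) (F : I -> R) (i0 : I) :
  P i0 -> exists j, P j /\ forall i, P i -> F j <= F i.
Proof. move=> Pi0; case: (arg_minP F Pi0) => j Pj H; by exists j. Qed.

Lemma sum_if (R : realFieldType) (n : nat) (U : {set 'I_n}) (x y : R) :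
  \sum_(i < n) (if i \in U then x else y) = x * #|U|%:R + y * (n - #|U|)%:R.
Proof.
rewrite (bigID (fun i => i \in U)) /=.
rewrite (eq_bigr (fun _ => x)); last by move=> i ->.
rewrite [X in _ + X](eq_bigr (fun _ => y)); last by move=> i /negbTE ->.
rewrite !sumr_const.
have -> : #|[pred i : 'I_n | ~~ (i \in U)]| = (n - #|U|)%N.
  have h := cardC (mem U); rewrite card_ord in h.
  apply/eqP; rewrite -(eqn_add2l #|U|) subnKC; last exact: (leq_trans (max_card _) (eq_leq (card_ord n))).
  by rewrite h.
by rewrite !mulr_natr.
Qed.

Theorem theorem1 (R : realFieldType) (n : nat) (hn : (0 < n)%N)
  (S : R) (C D : 'I_n -> R)
  (hS : 0 < S) (hC : forall i, 0 < C i) (hD : forall i, 0 < D i)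
  (bEQ : R) (hEQ : is_betaEQ S C D bEQ)
  (hnu : bEQ * (\sum_(i < n) D i) < S) :
  (forall theta : R, thetaU C D bEQ <= theta ->
     lp_optimal S C D theta (fun _ => bEQ) bEQ) /\
  (forall theta : R, 0 <= theta -> theta < thetaU C D bEQ ->
     exists (b : 'I_n -> R) (B : R), lp_feasible S C D b B /\
       n%:R * bEQ < \sum_(i < n) b i - theta * \sum_(i < n) (B - b i)).
Proof.
set mf := max_fill C D.
have mf_gt0 : forall i, 0 < mf i.
  by move=> i; rewrite /mf /max_fill /eff_demand divr_gt0 // lt_min hC hD.
have mf_le1 : forall i, mf i <= 1.
  move=> i; rewrite /mf /max_fill /eff_demand ler_pdivrMr // mul1r.
  by rewrite ge_min lexx orbT.
set Dt := \sum_(i < n) D i.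
have Dt_gt0 : 0 < Dt.
  rewrite /Dt (bigD1 (Ordinal hn)) //= ltr_pwDl ?hD //.
  by apply: sumr_ge0 => i _; apply: ltW.
have sumc : forall x : R, \sum_(i < n) x * D i = x * Dt.
  by move=> x; rewrite /Dt mulr_sumr.
case: hEQ => bEQ0 [[_ [hf [_ [_ hle1]]]] hmax].
have bEQle : forall i, bEQ <= mf i by move=> i; case: (hf i).
have [j [_ hj]] := @argmin_ex _ _ (fun _ => true) mf (Ordinal hn) isT.
have bEQj : bEQ = mf j.
  apply/eqP; rewrite eq_le bEQle /=.
  have [hc|hc] := lerP (mf j * Dt) S.
    apply: hmax; first exact: ltW.
    split; first by rewrite sumc.
    split; first by move=> i; rewrite ltW //= hj.
    by split=> //; rewrite ltW.
  have : S / Dt <= bEQ.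
    apply: hmax; first by rewrite ltW // divr_gt0.
    split; first by rewrite sumc mulfVK // gt_eqF.
    have h1 : S / Dt <= mf j by rewrite ler_pdivrMr // ltW.
    split; first by move=> i; rewrite ltW ?divr_gt0 //= (le_trans h1) ?hj.
    split=> //; split; first by rewrite ltW ?divr_gt0.
    exact: le_trans h1 (mf_le1 j).
  by rewrite ler_pdivrMr // => h; move: (le_lt_trans h hnu); rewrite ltxx.
set U := [set i : 'I_n | bEQ < mf i].
have bind : forall i, i \notin U -> mf i = bEQ.
  move=> i; rewrite inE => /negP h; apply/eqP; rewrite eq_le bEQle andbT.
  by rewrite leNgt; apply/negP.
set m := #|U|.
have mn : (m < n)%N.
  have h := cardC (mem U); rewrite card_ord in h.
  rewrite -h -[X in (X < _)%N]addn0 ltn_add2l; apply/card_gt0P.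
  by exists j; rewrite !inE -bEQj ltxx.
have hp : 0 < (n - m)%:R :> R by rewrite ltr0n subn_gt0.
have hN : n%:R = m%:R + (n - m)%:R :> R by rewrite -natrD subnKC // ltnW.
have m0 : 0 <= m%:R :> R by apply: ler0n.
have tU : thetaU C D bEQ = m%:R / (n - m)%:R by [].
rewrite tU; split.
- move=> th hth.
  have hth' : m%:R <= th * (n - m)%:R by rewrite -ler_pdivrMr.
  have th0 : 0 <= th by apply: le_trans hth; rewrite divr_ge0 // ltW.
  split.
    split; first by rewrite sumc ltW.
    split; first by move=> i; split; [exact: bEQ0 | exact: bEQle].
    by [].
  move=> b B [hsum [hb [hbB [B0 B1]]]].
  rewrite /lp_objective.
  have -> : \sum_(i < n) (bEQ - th * (bEQ - bEQ)) = n%:R * bEQ.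
    by rewrite (eq_bigr (fun _ => bEQ)) ?sumr_const ?card_ord ?mulr_natl // => i _; rewrite subrr mulr0 subr0.
  have key : forall g : 'I_n -> R, (forall i, b i <= g i) ->
      \sum_(i < n) (b i - th * (B - b i)) <= \sum_(i < n) ((1 + th) * g i - th * B).
    move=> g hg; apply: ler_sum => i _.
    have := hg i; have := th0; nra.
  have [hB|hB] := lerP bEQ B.
    apply: le_trans (key (fun i => if i \in U then B else bEQ) _) _.
      move=> i; case: ifP => hi; first by apply: hbB.
      by rewrite -(bind i) ?hi //; case: (hb i).
    rewrite big_split /= -mulr_sumr sumr_const card_ord sum_if -/m.
    rewrite -mulNr mulr_natr -mulrnAr -mulr_natr hN.
    have := hth'; have := hB; nra.
  apply: le_trans (key (fun _ => B) hbB) _.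
  rewrite (eq_bigr (fun _ => B)) => [|i _]; last by ring.
  rewrite sumr_const card_ord -mulr_natl.
  rewrite mulr1 -mulr_natl; have := ler0n R n; have := ltW hB; nra.
- move=> th th0 hth.
  have hth' : th * (n - m)%:R < m%:R by rewrite -ltr_pdivlMr.
  have : (0 < m)%N.
    rewrite lt0n; apply/negP => /eqP m00.
    by move: hth'; rewrite m00 ltNge mulr_ge0 // ltW.
  rewrite card_gt0 => /set0Pn [i0 Ui0].
  have [k [Uk hk]] := @argmin_ex _ _ (mem U) mf i0 Ui0.
  set eps := Num.min (mf k - bEQ) ((S - bEQ * Dt) / Dt).
  have eps0 : 0 < eps.
    have hk0 : bEQ < mf k by have : k \in U := Uk; rewrite inE.
    by rewrite lt_min subr_gt0 hk0 divr_gt0 ?subr_gt0.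
  have epsk : eps <= mf k - bEQ by rewrite ge_min lexx.
  have epsS : eps * Dt <= S - bEQ * Dt.
    by rewrite -ler_pdivlMr // ge_min lexx orbT.
  exists (fun i => if i \in U then bEQ + eps else bEQ), (bEQ + eps).
  split.
    split.
      apply: le_trans (_ : \sum_(i < n) (bEQ + eps) * D i <= _).
        apply: ler_sum => i _; rewrite ler_pM2r //; case: ifP => // _.
        by rewrite lerDl ltW.
      by rewrite sumc; lra.
    split.
      move=> i; case: ifP => hi.
        split; first by rewrite addr_ge0 // ltW.
        by change (bEQ + eps <= mf i); have := hk i hi; lra.
      by split.
    split.
      by move=> i; case: ifP => // _; rewrite lerDl ltW.
    split; first by rewrite addr_ge0 // ltW.
    by have := mf_le1 k; lra.
  rewrite sum_if -/m.
  rewrite (eq_bigr (fun i => if i \in U then 0 else eps)); last first.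
    by move=> i _; case: ifP => _; rewrite ?subrr // addrC addKr.
  rewrite sum_if -/m hN.
  have := hth'; have := eps0; nra.
Qed.
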